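(* (i) The equation $x^4-y^4=iz^2$ has only trivial solutions in Gaussian integers $x,y,z\in\mathbb{Z}[i]$, i.e. every solution satisfies $xyz=0$. (ii) The only nontrivial solutions $(x,y,z)\in\mathbb{Z}[i]^3$ (i.e. with $xyz\neq 0$) of the equation $x^4+y^4=iz^2$ satisfying $\gcd(x,y,z)=1$ are the triples $(x,y,z)$ with $x,y\in\{\pm i,\pm 1\}$ and $z=\pm i(1+i)$.
   Context: Here $i=\sqrt{-1}$ and $\mathbb{Z}[i]$ denotes the ring of Gaussian integers. A solution $(x,y,z)$ is called trivial if $xyz=0$. *)

(* Defs.v *)
From mathcomp Require Import all_boot all_order all_algebra all_field.
Set Implicit Arguments. Unset Strict Implicit. Unset Printing Implicit Defensive.
Import Order.TTheory GRing.Theory Num.Theory.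
Local Open Scope ring_scope.

(* Gaussian integers Z[i], realised inside the algebraic complex numbers algC:
   z is a Gaussian integer iff its real and imaginary parts are rational integers. *)
Definition gaussint (z : algC) : bool := ('Re z \in Num.int) && ('Im z \in Num.int).

Definition gdvd (d x : algC) : Prop := exists2 q, gaussint q & x = d * q.

Definition gunit (u : algC) : Prop := gaussint u /\ gdvd u 1.

Definition gcoprime3 (x y z : algC) : Prop :=
  forall d, gaussint d -> gdvd d x -> gdvd d y -> gdvd d z -> gunit d.

(* Main.v *)
Require Import Defs.
From mathcomp Require Import all_boot all_order all_algebra all_field.
From mathcomp Require Import ring lra zify.
From Stdlib Require Import Classical.
Set Implicit Arguments. Unset Strict Implicit. Unset Printing Implicit Defensive.
Import Order.TTheory GRing.Theory Num.Theory.
Local Open Scope ring_scope.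

Lemma gaussintD x y : gaussint x -> gaussint y -> gaussint (x + y).
Proof. by case/andP=> ? ? /andP[? ?]; apply/andP; rewrite !raddfD; split; apply: rpredD. Qed.
Lemma gaussintN x : gaussint x -> gaussint (- x).
Proof. by case/andP=> ? ?; apply/andP; rewrite !raddfN; split; rewrite rpredN. Qed.
Lemma gaussintB x y : gaussint x -> gaussint y -> gaussint (x - y).
Proof. by move=> hx hy; apply: gaussintD => //; apply: gaussintN. Qed.
Lemma gaussintM x y : gaussint x -> gaussint y -> gaussint (x * y).
Proof.
case/andP=> ? ? /andP[? ?]; apply/andP; rewrite ReM ImM; split.
  by apply: rpredB; apply: rpredM.
by apply: rpredD; apply: rpredM.
Qed.
Lemma gaussint_int (m : int) : gaussint m%:~R.
Proof.
apply/andP; have hr : (m%:~R : algC) \is Num.real by apply: Rreal_int; apply: intr_int.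
rewrite -[m%:~R]addr0 -[X in _ + X](mulr0 'i) Re_rect ?Im_rect ?rpred0 ?intr_int //.

Qed.
Lemma gaussint0 : gaussint 0. Proof. exact: (gaussint_int 0). Qed.
Lemma gaussint1 : gaussint 1. Proof. exact: (gaussint_int 1). Qed.
Lemma gaussint_nat n : gaussint n%:R. Proof. exact: (gaussint_int n). Qed.
Lemma gaussinti : gaussint 'i.
Proof. by apply/andP; rewrite Re_i Im_i rpred0 rpred1. Qed.
Lemma gaussintX x n : gaussint x -> gaussint (x ^+ n).
Proof. by move=> hx; elim: n => [|n IH]; rewrite ?expr0 ?gaussint1 // exprS gaussintM. Qed.
Lemma gaussintJ x : gaussint x -> gaussint x^*.
Proof. by case/andP=> ? ?; apply/andP; rewrite Re_conj Im_conj rpredN. Qed.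

Lemma gaussintP z : gaussint z -> exists m n : int, z = m%:~R + 'i * n%:~R.
Proof.
case/andP=> /intrP[m hm] /intrP[n hn]; exists m, n.
by rewrite -hm -hn -Crect.
Qed.
Lemma gaussint_mk (m n : int) : gaussint (m%:~R + 'i * n%:~R).
Proof. by apply: gaussintD; rewrite ?gaussint_int // gaussintM ?gaussinti ?gaussint_int. Qed.

Hint Resolve gaussint0 gaussint1 gaussinti gaussint_int gaussint_nat : core.

Definition nrm (z : algC) : nat := Num.truncn (`|z| ^+ 2).

Lemma nrmE z : gaussint z -> (nrm z)%:R = `|z| ^+ 2.
Proof.
case/andP=> hr hi; rewrite /nrm truncnK // normC2_Re_Im.
by rewrite rpredD // natr_exp_even.
Qed.

Lemma nrmM x y : gaussint x -> gaussint y -> nrm (x * y) = (nrm x * nrm y)%N.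
Proof.
move=> hx hy; apply/eqP; rewrite -(eqr_nat algC) natrM !nrmE ?gaussintM //.
by rewrite normrM exprMn.
Qed.

Lemma nrm_eq0 x : gaussint x -> (nrm x == 0%N) = (x == 0).
Proof.
by move=> hx; rewrite -(eqr_nat algC) nrmE // sqrf_eq0 normr_eq0.
Qed.

Lemma nrm_mk (m n : int) : nrm (m%:~R + 'i * n%:~R) = absz (m ^+ 2 + n ^+ 2).
Proof.
apply/eqP; rewrite -(eqr_nat algC) nrmE ?gaussint_mk // normC2_rect ?Rreal_int ?intr_int //.
rewrite pmulrn abszE ger0_norm ?addr_ge0 ?sqr_ge0 //.
by rewrite rmorphD !rmorphXn.
Qed.

Lemma unit_cases u : gaussint u -> nrm u = 1%N ->
  [\/ u = 1, u = -1, u = 'i | u = - 'i].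
Proof.
move=> /gaussintP[m [n ->]]; rewrite nrm_mk => h.
have h1 : m ^+ 2 + n ^+ 2 = 1.
  have h0 : 0 <= m ^+ 2 + n ^+ 2 by rewrite addr_ge0 ?sqr_ge0.
  by rewrite -[LHS]gez0_abs // h.
have : (m == 0) && ((n == 1) || (n == -1)) || (n == 0) && ((m == 1) || (m == -1)).
  by lia.
case/orP=> /andP[/eqP-> /orP[]/eqP->].
- by constructor 3; rewrite mulr1 add0r.
- by constructor 4; rewrite mulrN1 add0r.
- by constructor 1; rewrite mulr0 addr0.
- by constructor 2; rewrite mulr0 addr0.
Qed.

Lemma nrm_unitE u : gaussint u -> nrm u = 1%N -> u^* * u = 1.
Proof.
by move=> hu h; rewrite -normCKC -nrmE // h.
Qed.

Lemma unit4 u : gaussint u -> nrm u = 1%N -> u ^+ 4 = 1.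
Proof.
move=> hu h; have := unit_cases hu h.
have e : forall v : algC, v ^+ 4 = (v ^+ 2) ^+ 2 by move=> v; rewrite -exprM.
by case=> ->; rewrite e ?sqrrN ?sqrCi ?sqrrN !expr1n.
Qed.

Lemma gdvd_refl x : gdvd x x.
Proof. by exists 1; rewrite ?mulr1. Qed.
Lemma gdvd0 x : gdvd x 0.
Proof. by exists 0; rewrite ?mulr0. Qed.
Lemma gdvd1 x : gaussint x -> gdvd 1 x.
Proof. by move=> hx; exists x; rewrite ?mul1r. Qed.
Lemma gdvd_trans d x y : gdvd d x -> gdvd x y -> gdvd d y.
Proof.
move=> [q hq ->] [r hr ->]; exists (q * r); first exact: gaussintM.
by rewrite mulrA.
Qed.
Lemma gdvdMr d x y : gaussint y -> gdvd d x -> gdvd d (x * y).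
Proof. move=> hy [q hq ->]; exists (q * y); rewrite ?mulrA //; exact: gaussintM. Qed.
Lemma gdvdMl d x y : gaussint y -> gdvd d x -> gdvd d (y * x).
Proof. by move=> hy h; rewrite mulrC; apply: gdvdMr. Qed.
Lemma gdvdD d x y : gdvd d x -> gdvd d y -> gdvd d (x + y).
Proof. move=> [q hq ->] [r hr ->]; exists (q + r); rewrite ?mulrDr //; exact: gaussintD. Qed.
Lemma gdvdN d x : gdvd d x -> gdvd d (- x).
Proof. move=> [q hq ->]; exists (- q); rewrite ?mulrN //; exact: gaussintN. Qed.
Lemma gdvdB d x y : gdvd d x -> gdvd d y -> gdvd d (x - y).
Proof. by move=> h1 h2; apply: gdvdD => //; apply: gdvdN. Qed.
Lemma gdvdX d x n : gaussint x -> gdvd d x -> gdvd d (x ^+ n.+1).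
Proof. by move=> hx h; rewrite exprS; apply: gdvdMr => //; apply: gaussintX. Qed.
Lemma gdvd_mul2 d1 d2 x y : gdvd d1 x -> gdvd d2 y -> gdvd (d1 * d2) (x * y).
Proof.
move=> [q hq ->] [r hr ->]; exists (q * r); first exact: gaussintM.
by rewrite mulrACA.
Qed.

Lemma gdvd_gaussint d x : gaussint d -> gdvd d x -> gaussint x.
Proof. by move=> hd [q hq ->]; apply: gaussintM. Qed.

Lemma gdvd_nrm d x : gaussint d -> gdvd d x -> (nrm d %| nrm x)%N.
Proof. by move=> hd [q hq ->]; rewrite nrmM // dvdn_mulr. Qed.

Lemma gdvd_nrm_le d x : gaussint d -> gdvd d x -> x != 0 -> (nrm d <= nrm x)%N.
Proof.
move=> hd hdx hx0; apply: dvdn_leq; last exact: gdvd_nrm.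
by rewrite lt0n nrm_eq0 // (gdvd_gaussint hd hdx).
Qed.

Definition gu u := gaussint u /\ nrm u = 1%N.

Lemma gu_dvd u x : gu u -> gaussint x -> gdvd u x.
Proof.
move=> [hu h1] hx; exists (u^* * x); first by apply: gaussintM => //; apply: gaussintJ.
by rewrite mulrA [u * _]mulrC nrm_unitE // mul1r.
Qed.

Lemma gu_of_dvd d u : gaussint d -> gdvd d u -> gu u -> gu d.
Proof.
move=> hd [q hq hu] [hu' h1]; split => //.
by move: h1; rewrite hu nrmM // => /eqP; rewrite muln_eq1 => /andP[/eqP].
Qed.

Lemma guM u v : gu u -> gu v -> gu (u * v).
Proof. by move=> [hu h1] [hv h2]; split; rewrite ?gaussintM ?nrmM ?h1 ?h2. Qed.

Lemma guJ u : gu u -> gu u^*.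
Proof.
move=> [hu h1]; split; first exact: gaussintJ.
apply/eqP; rewrite -(eqr_nat algC) nrmE ?gaussintJ // norm_conjC -nrmE // h1 //.
Qed.

Lemma gu_neq0 u : gu u -> u != 0.
Proof. by move=> [hu h1]; rewrite -nrm_eq0 // h1. Qed.

Lemma gu1 : gu 1. Proof. by split => //; rewrite /nrm normr1 expr1n truncn1. Qed.
Lemma guN u : gu u -> gu (- u).
Proof. by move=> [hu h1]; split; rewrite ?gaussintN //; apply/eqP; rewrite -(eqr_nat algC) nrmE ?gaussintN // normrN -nrmE // h1. Qed.
Lemma gui : gu 'i.
Proof. by split => //; rewrite /nrm normCi expr1n truncn1. Qed.

Lemma gdvd_unitl d u x : gu u -> gdvd (u * d) x -> gdvd d x.
Proof.
move=> [hu h1] [q hq ->]; exists (u * q); first exact: gaussintM.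
by rewrite mulrA [d * u]mulrC.
Qed.
Lemma gdvd_unitr d u x : gu u -> gaussint x -> gdvd d (u * x) -> gdvd d x.
Proof.
move=> [hu h1] hx [q hq hxq]; exists (u^* * q); first by apply: gaussintM => //; apply: gaussintJ.
have : u^* * (u * x) = x by rewrite mulrA nrm_unitE // mul1r.
by rewrite hxq => <-; rewrite mulrCA.
Qed.

Lemma round_real (x : algC) : x \is Num.real -> exists m : int, `|x - m%:~R| <= 2^-1.
Proof.
move=> xr; have hr : x + 2^-1 \is Num.real by rewrite rpredD // rpredV realn.
exists (Num.floor (x + 2^-1)).
have h1 := real_ge_floor hr; have h2 := real_gt_pred_ceil hr.
set m := Num.floor _ in h1 h2 *.
rewrite real_ler_norml; last by rewrite rpredB // Rreal_int // intr_int.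
apply/andP; split.
  rewrite -subr_ge0 (_ : x - m%:~R - - 2^-1 = x + 2^-1 - m%:~R); first by rewrite subr_ge0.
  by ring.
rewrite rmorphD /= in h2.
rewrite -subr_ge0 (_ : 2^-1 - (x - m%:~R) = m%:~R + 1 - (x + 2^-1)).
  by apply: ltW; rewrite subr_gt0.
by field.
Qed.

Lemma sq_half_le (u : algC) : u \is Num.real -> `|u| <= 2^-1 -> u ^+ 2 <= 2^-1 ^+ 2.
Proof.
move=> ur hu; rewrite -real_normK // !expr2.
by apply: ler_pM; rewrite ?normr_ge0.
Qed.

Lemma gdiv a b : gaussint a -> gaussint b -> b != 0 ->
  exists2 q, gaussint q & (nrm (a - b * q)%R < nrm b)%N.
Proof.
move=> ha hb b0.
set w := a / b.
have [m1 h1] := round_real (Creal_Re w).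
have [m2 h2] := round_real (Creal_Im w).
pose q : algC := m1%:~R + 'i * m2%:~R.
have hq : gaussint q by exact: gaussint_mk.
exists q => //.
rewrite -(ltr_nat algC) !nrmE ?gaussintB ?gaussintM //.
have -> : a - b * q = b * (w - q) by rewrite /w mulrBr mulrCA mulfV // mulr1.
rewrite normrM exprMn gtr_pMr ?exprn_gt0 ?normr_gt0 //.
have eRe : 'Re (w - q) = 'Re w - m1%:~R by rewrite raddfB /= Re_rect ?Rreal_int ?intr_int.
have eIm : 'Im (w - q) = 'Im w - m2%:~R by rewrite raddfB /= Im_rect ?Rreal_int ?intr_int.
rewrite normC2_Re_Im eRe eIm.
have b1 := sq_half_le (rpredB (Creal_Re w) (Rreal_int (intr_int _ m1))) h1.
have b2 := sq_half_le (rpredB (Creal_Im w) (Rreal_int (intr_int _ m2))) h2.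
apply: (le_lt_trans (lerD b1 b2)).
rewrite -subr_gt0 (_ : 1 - _ = 2^-1); first by rewrite invr_gt0 ltr0n.
by field.
Qed.


Definition girr p := [/\ gaussint p, (1 < nrm p)%N &
  forall d, gaussint d -> gdvd d p -> nrm d = 1%N \/ nrm d = nrm p].

Lemma assoc_dvd g p : gaussint g -> gdvd g p -> nrm g = nrm p -> p != 0 -> gdvd p g.
Proof.
move=> hg [t ht ep] en p0.
have g0 : nrm g != 0%N by rewrite en nrm_eq0 // ep gaussintM.
have t1 : nrm t = 1%N.
  move: en; rewrite ep nrmM // => /eqP; rewrite -{1}[nrm g]muln1 eqn_mul2l.
  by rewrite (negPf g0) /= => /eqP.
exists t^*; first exact: gaussintJ.
by rewrite ep -mulrA [t * _]mulrC nrm_unitE // mulr1.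
Qed.

Lemma irr_exists x : gaussint x -> (1 < nrm x)%N -> exists2 p, girr p & gdvd p x.
Proof.
have [n] := ubnP (nrm x); elim: n x => // n IH x ltxn hx h1.
case: (classic (girr x)) => [hi|hni]; first by exists x => //; exact: gdvd_refl.
have x0 : x != 0 by rewrite -nrm_eq0 // -lt0n (ltn_trans _ h1).
have : ~ (forall d, gaussint d -> gdvd d x -> nrm d = 1%N \/ nrm d = nrm x).
  by move=> hall; apply: hni.
move/not_all_ex_not => [d hd]. have [gd hd1] := imply_to_and _ _ hd. have [dx hd2] := imply_to_and _ _ hd1. have [n1 n2] := not_or_and _ _ hd2.
have d0 : nrm d != 0%N.
  by apply/eqP => /eqP; rewrite nrm_eq0 // => /eqP d0; move: dx x0; rewrite d0 => -[q _ ->]; rewrite mul0r eqxx.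
have le := gdvd_nrm_le gd dx x0.
have [p pi pd] : exists2 p, girr p & gdvd p d.
  apply: (IH d) => //.
    by move: le ltxn n2; lia.
  by move: d0 n1; lia.
by exists p => //; apply: gdvd_trans pd dx.
Qed.

Lemma ideal_gen a p : gaussint a -> gaussint p -> p != 0 ->
  exists g, exists u, exists v, [/\ gaussint u, gaussint v, g = u * a + v * p,
     g != 0 & (gdvd g a /\ gdvd g p)].
Proof.
move=> ha hp p0.
suff: forall n u v, gaussint u -> gaussint v -> u * a + v * p != 0 ->
   (nrm (u * a + v * p)%R < n)%N ->
   exists g, exists u, exists v, [/\ gaussint u, gaussint v, g = u * a + v * p,
     g != 0 & (gdvd g a /\ gdvd g p)].
  move=> /(_ (nrm p).+1 0 1); rewrite mul0r mul1r add0r; apply => //.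
elim=> // n IH u v hu hv g0 ltn.
set g := u * a + v * p in g0 ltn *.
have hg : gaussint g by apply: gaussintD; apply: gaussintM.
have [q1 hq1 lt1] := gdiv ha hg g0.
have [q2 hq2 lt2] := gdiv hp hg g0.
have [r10|r1n0] := eqVneq (a - g * q1) 0.
  have [r20|r2n0] := eqVneq (p - g * q2) 0.
    exists g, u, v; split => //; split.
      by exists q1 => //; apply/eqP; rewrite -subr_eq0 r10.
    by exists q2 => //; apply/eqP; rewrite -subr_eq0 r20.
  apply: (IH (- u * q2) (1 - v * q2)).
  - by apply: gaussintM => //; apply: gaussintN.
  - by apply: gaussintB => //; apply: gaussintM.
  - by rewrite (_ : _ + _ = p - g * q2) // /g; ring.
  - by rewrite (_ : _ + _ = p - g * q2); [apply: leq_trans lt2 _; rewrite -ltnS | rewrite /g; ring].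
apply: (IH (1 - u * q1) (- v * q1)).
- by apply: gaussintB => //; apply: gaussintM.
- by apply: gaussintM => //; apply: gaussintN.
- by rewrite (_ : _ + _ = a - g * q1) // /g; ring.
- by rewrite (_ : _ + _ = a - g * q1); [apply: leq_trans lt1 _; rewrite -ltnS | rewrite /g; ring].
Qed.

Lemma euclid p a b : girr p -> gaussint a -> gaussint b -> gdvd p (a * b) ->
  gdvd p a \/ gdvd p b.
Proof.
move=> [hp p1 pirr] ha hb hab.
have p0 : p != 0 by rewrite -nrm_eq0 // -lt0n (ltn_trans _ p1).
have [g [u [v [hu hv eg g0 [ga gp]]]]] := ideal_gen ha hp p0.
have hg : gaussint g by rewrite eg; apply: gaussintD; apply: gaussintM.
case: (pirr g hg gp) => [g1|gn].
  right.
  have -> : b = g^* * (u * (a * b) + v * p * b).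
    transitivity (g^* * g * b); first by rewrite nrm_unitE // mul1r.
    by rewrite {2}eg; ring.
  apply: gdvdMl; first exact: gaussintJ.
  apply: gdvdD; first exact: gdvdMl.
  by rewrite -mulrA; apply: gdvdMl => //; apply: gdvdMr => //; exact: gdvd_refl.
left; apply: gdvd_trans ga; exact: assoc_dvd.
Qed.

Definition lam : algC := 1 + 'i.

Lemma gaussint_lam : gaussint lam.
Proof. by rewrite /lam gaussintD. Qed.
Hint Resolve gaussint_lam : core.

Lemma nrm_lam : nrm lam = 2%N.
Proof.
have -> : lam = (1:int)%:~R + 'i * (1:int)%:~R by rewrite /lam !rmorph1 mulr1.
by rewrite nrm_mk.
Qed.

Lemma girr_lam : girr lam.
Proof.
split => //; first by rewrite nrm_lam.
move=> d hd hdl; have := gdvd_nrm hd hdl; rewrite nrm_lam => h.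
have h2 : (nrm d <= 2)%N by apply: dvdn_leq.
have h0 : nrm d != 0%N by apply: contraTneq h => ->.
by move: h2 h0; lia.
Qed.

Lemma lam0 : lam != 0.
Proof. by rewrite -nrm_eq0 // nrm_lam. Qed.

Definition cop a b := forall d, gaussint d -> gdvd d a -> gdvd d b -> nrm d = 1%N.

Lemma cop_irr a b : (forall p, girr p -> gdvd p a -> gdvd p b -> False) -> cop a b.
Proof.
move=> H d hd da db.
have [d0|dn0] := eqVneq (nrm d) 0%N.
  move: d0 => /eqP; rewrite nrm_eq0 // => /eqP d0.
  move: da db; rewrite d0 => -[q1 _ ea] [q2 _ eb].
  rewrite mul0r in ea; rewrite mul0r in eb; rewrite ea eb in H.
  by case: (H lam girr_lam (gdvd0 _) (gdvd0 _)).
have [d1|d1] := eqVneq (nrm d) 1%N => //.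
have [p pi pd] : exists2 p, girr p & gdvd p d.
  by apply: irr_exists => //; move: dn0 d1; lia.
by case: (H p pi (gdvd_trans pd da) (gdvd_trans pd db)).
Qed.

Lemma irr_not_unit p e : girr p -> gu e -> gdvd p e -> False.
Proof.
move=> [hp p1 _] [he e1] hpe; have := gdvd_nrm hp hpe; rewrite e1 dvdn1 => /eqP h.
by rewrite h in p1.
Qed.

Lemma irr_neq0 p : girr p -> p != 0.
Proof. by move=> [hp p1 _]; rewrite -nrm_eq0 //; move: p1; lia. Qed.

Lemma euclidX p c n : girr p -> gaussint c -> gdvd p (c ^+ n) -> gdvd p c.
Proof.
move=> pi hc; elim: n => [|n IH].
  by rewrite expr0 => h; case: (irr_not_unit pi gu1 h).
rewrite exprS => h; have [//|] := euclid pi hc (gaussintX n hc) h.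
exact: IH.
Qed.

Lemma euclid_unit p e x : girr p -> gu e -> gaussint x -> gdvd p (e * x) -> gdvd p x.
Proof.
move=> pi eu hx h; have [|//] := euclid pi (proj1 eu) hx h.
by move/(irr_not_unit pi eu).
Qed.

Lemma cop_dvdl a b a' : gdvd a' a -> cop a b -> cop a' b.
Proof. by move=> h c d hd da db; apply: c => //; apply: gdvd_trans h. Qed.
Lemma cop_dvdr a b b' : gdvd b' b -> cop a b -> cop a b'.
Proof. by move=> h c d hd da db; apply: c => //; apply: gdvd_trans h. Qed.
Lemma cop_sym a b : cop a b -> cop b a.
Proof. by move=> c d hd da db; apply: c. Qed.

Lemma cancel_l (p x y : algC) : p != 0 -> p * x = p * y -> x = y.
Proof. by move=> p0; apply: mulfI. Qed.

Lemma sq_lemma n a b c e : (nrm c < n)%N -> gaussint a -> gaussint b -> gaussint c -> gu e ->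
  a * b = e * c ^+ 2 -> cop a b -> c != 0 ->
  exists al, exists a', [/\ gu al, gaussint a', a = al * a' ^+ 2 & gdvd a' c].
Proof.
elim: n a b c => // n IH a b c ltn ha hb hc eu eab cab c0.
have [a1|a1] := eqVneq (nrm a) 1%N.
  exists a, (1:algC); split => //; first by rewrite expr1n mulr1.
  exact: gdvd1.
have [a0|a0] := eqVneq (nrm a) 0%N.
  move: a0 => /eqP; rewrite nrm_eq0 // => /eqP a0.
  move: eab; rewrite a0 mul0r => /esym/eqP; rewrite mulf_eq0 (negPf (gu_neq0 eu)) /=.
  by rewrite expf_eq0 (negPf c0) andbF.
have [p pi pa] : exists2 p, girr p & gdvd p a.
  by apply: irr_exists => //; move: a0 a1; lia.
have p0 := irr_neq0 pi.
have [hp p1 _] := pi.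
have pc : gdvd p c.
  apply: (@euclidX p c 2 pi hc); apply: (euclid_unit pi eu (gaussintX 2 hc)).
  by rewrite -eab; apply: gdvdMr.
have pnb : ~ gdvd p b.
  by move=> pb; have := cab p hp pa pb; move: p1; lia.
case: pc => c1 hc1 ec; case: pa => a1' ha1 ea.
have e1 : a1' * b = p * (e * c1 ^+ 2).
  apply: (cancel_l p0); rewrite mulrA -ea eab ec; ring.
have pa1 : gdvd p a1'.
  have hgd : gdvd p (a1' * b).
    by exists (e * c1 ^+ 2) => //; apply: gaussintM; [case: eu | apply: gaussintX].
  have [//|pb] := euclid pi ha1 hb hgd.
  by case: pnb.
case: pa1 => a2 ha2 ea1.
have e2 : a2 * b = e * c1 ^+ 2.
  by apply: (cancel_l p0); rewrite mulrA -ea1 e1.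
have c10 : c1 != 0 by apply: contraNneq c0 => c10; rewrite ec c10 mulr0.
have lt1 : (nrm c1 < n)%N.
  have : nrm c = (nrm p * nrm c1)%N by rewrite ec nrmM.
  have : nrm c1 != 0%N by rewrite nrm_eq0.
  by move: ltn p1; nia.
have cop2 : cop a2 b.
  apply: cop_dvdl cab; exists (p * p); first exact: gaussintM.
  by rewrite ea ea1; ring.
have [al [a' [alu ha' ea2 a'c1]]] := IH a2 b c1 lt1 ha2 hb hc1 eu e2 cop2 c10.
exists al, (p * a'); split => //; first exact: gaussintM.
  by rewrite ea ea1 ea2; ring.
by rewrite ec; apply: gdvd_mul2 => //; exact: gdvd_refl.
Qed.

Lemma sq2 a b c e : gaussint a -> gaussint b -> gaussint c -> gu e ->
  a * b = e * c ^+ 2 -> cop a b -> c != 0 ->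
  exists al, exists be, exists A, exists B,
   [/\ gu al /\ gu be, al * be = e, gaussint A /\ gaussint B,
       a = al * A ^+ 2 /\ b = be * B ^+ 2 & c = A * B].
Proof.
move=> ha hb hc eu eab cab c0.
have [al [A [alu hA ea [B hB ec]]]] := sq_lemma (ltnSn (nrm c)) ha hb hc eu eab cab c0.
have A0 : A != 0 by apply: contraNneq c0 => A0; rewrite ec A0 mul0r.
have [hal al1] := alu.
exists al, (al^* * e), A, B; split => //.
- split => //; apply: guM => //; exact: guJ.
- by rewrite mulrA [al * _]mulrC nrm_unitE // mul1r.
split => //.
have al0 := gu_neq0 alu.
apply: (cancel_l (mulf_neq0 al0 (expf_neq0 2 A0))).
rewrite -ea eab ec ea.
transitivity (al^* * al * (e * (A * B) ^+ 2)); first by rewrite nrm_unitE // mul1r.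
move: (al^*) => u; ring.
Qed.

Lemma sq4 a b y e : gaussint a -> gaussint b -> gaussint y -> gu e ->
  a * b = e * y ^+ 4 -> cop a b -> y != 0 ->
  exists al, exists be, exists r, exists s,
   [/\ gu al /\ gu be, al * be = e, gaussint r /\ gaussint s,
       a = al * r ^+ 4 /\ b = be * s ^+ 4 & y = r * s].
Proof.
move=> ha hb hy eu eab cab y0.
have e4 : forall z : algC, z ^+ 4 = (z ^+ 2) ^+ 2 by move=> z; rewrite -exprM.
have eab2 : a * b = e * (y ^+ 2) ^+ 2 by rewrite eab e4.
have [al [be [A [B [[alu beu] albe [hA hB] [ea eb] ey2]]]]] :=
  sq2 ha hb (gaussintX 2 hy) eu eab2 cab (expf_neq0 2 y0).
have dA : gdvd A a.
  exists (al * A); first by apply: gaussintM => //; case: alu.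
  by rewrite ea; ring.
have dB : gdvd B b.
  exists (be * B); first by apply: gaussintM => //; case: beu.
  by rewrite eb; ring.
have cAB : cop A B by apply: (cop_dvdl dA); apply: (cop_dvdr dB).
have eAB : A * B = 1 * y ^+ 2 by rewrite -ey2 mul1r.
have [al1 [be1 [r [s [[al1u be1u] albe1 [hr hs] [eA eB] ey]]]]] :=
  sq2 hA hB hy gu1 eAB cAB y0.
exists (al * al1 ^+ 2), (be * be1 ^+ 2), r, s; split => //.
- by split; apply: guM => //; rewrite expr2; apply: guM.
- by rewrite -albe -[RHS]mulr1 -(expr1n _ 2) -albe1; ring.
- by split; [rewrite ea eA | rewrite eb eB]; ring.
Qed.

Lemma int_parity (z : int) : exists k : int, z = k * 2 \/ z = k * 2 + 1.
Proof.
exists (z %/ 2)%Z; have := divz_eq z 2.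
have h0 : (0 <= z %% 2)%Z by apply: modz_ge0.
have h1 : (z %% 2 < 2)%Z by apply: ltz_pmod.
lia.
Qed.

Lemma sqi : 'i ^+ 2 = -1 :> algC. Proof. exact: sqrCi. Qed.

Definition ev (x : algC) := gdvd lam x.

Lemma ev_mk (m n k : int) : m + n = k * 2 -> ev (m%:~R + 'i * n%:~R).
Proof.
move=> h; exists (k%:~R + 'i * (k - m)%:~R); first exact: gaussint_mk.
have -> : n = k * 2 - m by rewrite -h; ring.
rewrite /lam !(rmorphB, rmorphM) /=.
apply/eqP; rewrite -subr_eq0; apply/eqP.
transitivity ((m%:~R - k%:~R) * ('i ^+ 2 + 1) : algC); first by ring.
by rewrite sqi addNr mulr0.
Qed.

Lemma ev_or x : gaussint x -> ev x \/ ev (x - 1).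
Proof.
move=> /gaussintP[m [n ->]]; have [k [hk|hk]] := int_parity (m + n).
  by left; apply: (ev_mk hk).
right; have -> : m%:~R + 'i * n%:~R - 1 = (m - 1)%:~R + 'i * n%:~R :> algC.
  by rewrite rmorphB /= rmorph1; ring.
by apply: (ev_mk (k := k)); rewrite -addrA [- 1 + n]addrC addrA hk; ring.
Qed.

Lemma ev_sub x y : ev x -> ev y -> ev (x - y). Proof. exact: gdvdB. Qed.
Lemma ev_add x y : ev x -> ev y -> ev (x + y). Proof. exact: gdvdD. Qed.
Lemma ev_mull x y : gaussint y -> ev x -> ev (y * x). Proof. exact: gdvdMl. Qed.
Lemma ev_mulr x y : gaussint y -> ev x -> ev (x * y). Proof. exact: gdvdMr. Qed.
Lemma ev_lam : ev lam. Proof. exact: gdvd_refl. Qed.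
Lemma ev0 : ev 0. Proof. exact: gdvd0. Qed.

Lemma odd_sub1 x : gaussint x -> ~ ev x -> ev (x - 1).
Proof. by move=> hx hn; case: (ev_or hx). Qed.

Lemma odd_sub x y : gaussint x -> gaussint y -> ~ ev x -> ~ ev y -> ev (x - y).
Proof.
move=> hx hy ox oy; have := ev_sub (odd_sub1 hx ox) (odd_sub1 hy oy).
by rewrite opprB addrA subrK.
Qed.

Lemma odd_mul x y : gaussint x -> gaussint y -> ~ ev x -> ~ ev y -> ~ ev (x * y).
Proof. by move=> hx hy ox oy /(euclid girr_lam hx hy) []. Qed.

Lemma odd_pow x n : gaussint x -> ~ ev x -> ~ ev (x ^+ n).
Proof. by move=> hx ox /(euclidX girr_lam hx). Qed.

Lemma odd_unit u : gu u -> ~ ev u.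
Proof. by move=> uu h; apply: (irr_not_unit girr_lam uu h). Qed.

Lemma ev_unitl u x : gu u -> gaussint x -> ev (u * x) -> ev x.
Proof. exact: euclid_unit girr_lam. Qed.

Lemma ev_pow x n : gaussint x -> ev (x ^+ n.+1) -> ev x.
Proof. by move=> hx /(euclidX girr_lam hx). Qed.

Lemma lam2 : lam ^+ 2 = 2 * 'i.
Proof.
rewrite /lam; apply/eqP; rewrite -subr_eq0; apply/eqP.
transitivity ('i ^+ 2 + 1 : algC); first by ring.
by rewrite sqi addNr.
Qed.

Lemma lam4 : lam ^+ 4 = - 4.
Proof.
have -> : lam ^+ 4 = (lam ^+ 2) ^+ 2 by rewrite -exprM.
by rewrite lam2 exprMn sqi; ring.
Qed.

Lemma two_lam : 2 = lam * (1 - 'i).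
Proof.
rewrite /lam; apply/eqP; rewrite -subr_eq0; apply/eqP.
transitivity (('i ^+ 2 + 1) : algC); first by ring.
by rewrite sqi addNr.
Qed.

Lemma ev2 : ev 2.
Proof. by exists (1 - 'i); [apply: gaussintB | exact: two_lam]. Qed.

Lemma ev_mul2 x : gaussint x -> ev (2 * x).
Proof. by move=> hx; apply: ev_mulr => //; exact: ev2. Qed.

Lemma not_ev1 : ~ ev 1.
Proof. exact: odd_unit gu1. Qed.

Ltac gauss := repeat match goal with
  | |- is_true (gaussint (@Algebra.add _ _ _)) => apply: gaussintD
  | |- is_true (gaussint (@Algebra.opp _ _)) => apply: gaussintN
  | |- is_true (gaussint (@GRing.mul _ _ _)) => apply: gaussintM
  | |- is_true (gaussint (@GRing.exp _ _ _)) => apply: gaussintX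
  | |- is_true (gaussint (@Num.conj _ _)) => apply: gaussintJ
  | |- is_true (gaussint (@intmul _ _ _)) => apply: gaussint_int
  | |- is_true (gaussint (@Algebra.natmul _ _ _)) => apply: gaussint_nat
  | |- is_true (gaussint (@Algebra.zero _)) => apply: gaussint0
  | |- is_true (gaussint (GRing.one _)) => apply: gaussint1
  | |- is_true (gaussint (@Num.imaginary _)) => apply: gaussinti
  | |- is_true (gaussint lam) => apply: gaussint_lam
  | H : is_true (gaussint ?x) |- is_true (gaussint ?x) => exact: H
  end.

Lemma lin (a b c d : algC) : c = d -> a - b = c - d -> a = b.
Proof. by move=> -> /eqP; rewrite subrr subr_eq0 => /eqP. Qed.

Lemma sq_mod4 x : gaussint x -> ~ ev x ->
  exists s, (s = 1 \/ s = -1) /\ gdvd 4 (x ^+ 2 - s).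
Proof.
move=> /[dup] hx /gaussintP[m [n ex]] ox.
have [k [hk|hk]] := int_parity m; have [l [hl|hl]] := int_parity n.
- by case: ox; rewrite ex; apply: (ev_mk (k := k + l)); rewrite hk hl; ring.
- exists (-1); split; first by right.
  exists (k%:~R ^+ 2 - l%:~R ^+ 2 - l%:~R + 'i * (k%:~R * (2 * l%:~R + 1))); first by gauss.
  rewrite ex hk hl !(rmorphD, rmorphM) /= rmorph1.
  apply/eqP; rewrite -subr_eq0; apply/eqP.
  transitivity ((1 + 4 * l%:~R + 4 * l%:~R ^+ 2) * ('i ^+ 2 + 1) : algC); first by ring.
  by rewrite sqi addNr mulr0.
- exists 1; split; first by left.
  exists (k%:~R ^+ 2 + k%:~R - l%:~R ^+ 2 + 'i * ((2 * k%:~R + 1) * l%:~R)); first by gauss.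
  rewrite ex hk hl !(rmorphD, rmorphM) /= rmorph1.
  apply/eqP; rewrite -subr_eq0; apply/eqP.
  transitivity ((4 * l%:~R ^+ 2) * ('i ^+ 2 + 1) : algC); first by ring.
  by rewrite sqi addNr mulr0.
- by case: ox; rewrite ex; apply: (ev_mk (k := k + l + 1)); rewrite hk hl; ring.
Qed.

Lemma sq_mod4' x : gaussint x -> ~ ev x ->
  exists s, exists t, [/\ s = 1 \/ s = -1, gaussint t & x ^+ 2 = s + 4 * t].
Proof.
move=> hx ox; have [s [hs [t ht et]]] := sq_mod4 hx ox.
by exists s, t; split => //; rewrite -et; ring.
Qed.

Lemma pow4_mod8 x : gaussint x -> ~ ev x ->
  exists a, gaussint a /\ x ^+ 4 = 1 + 8 * a.
Proof.
move=> hx ox; have [s [t [hs ht et]]] := sq_mod4' hx ox.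
exists (s * t + 2 * t ^+ 2); split; first by case: hs => ->; gauss.
have -> : x ^+ 4 = (x ^+ 2) ^+ 2 by rewrite -exprM.
rewrite et; case: hs => ->; ring.
Qed.

Lemma nrm4 : nrm 4 = 16%N.
Proof.
have -> : (4 : algC) = (4:int)%:~R + 'i * (0:int)%:~R by rewrite mulr0 addr0.
by rewrite nrm_mk.
Qed.

Lemma not4 u : u = 'i \/ u = - 'i -> ~ gdvd 4 (1 - u).
Proof.
move=> hu /(gdvd_nrm (gaussint_nat 4)); rewrite nrm4.
have : nrm (1 - u) = 2%N.
  case: hu => ->.
    have -> : (1 - 'i : algC) = (1:int)%:~R + 'i * (-1:int)%:~R.
      by rewrite rmorph1 rmorphN rmorph1 mulrN1.
    by rewrite nrm_mk.
  have -> : (1 - - 'i : algC) = (1:int)%:~R + 'i * (1:int)%:~R.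
    by rewrite rmorph1 mulr1 opprK.
  by rewrite nrm_mk.
by move=> ->.
Qed.

Lemma L1 r s x e c : gaussint r -> gaussint s -> gaussint x ->
  ~ ev r -> ev s -> ~ ev x -> (e = 1 \/ e = -1) -> (c = 'i \/ c = - 'i) ->
  r ^+ 4 + e * s ^+ 4 = c * x ^+ 2 -> False.
Proof.
move=> hr hs hx orr [s1 hs1 es] ox he hc H.
have [a [ha ea]] := pow4_mod8 hr orr.
have [sg [t [hsg ht et]]] := sq_mod4' hx ox.
have es4 : s ^+ 4 = - 4 * s1 ^+ 4 by rewrite es exprMn lam4.
rewrite ea es4 et in H.
apply: (@not4 (c * sg)).
  by case: hc => ->; case: hsg => ->; rewrite ?mulr1 ?mulrN1 ?opprK; auto.
exists (c * t - 2 * a + e * s1 ^+ 4).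
  by case: hc => ->; case: he => ->; gauss.
apply: (lin H); ring.
Qed.

Lemma L2 r s x e c : gaussint r -> gaussint s -> gaussint x ->
  ~ ev r -> ~ ev s -> ~ ev x -> (e = 1 \/ e = -1) -> gu c ->
  r ^+ 4 + e * s ^+ 4 = c * x ^+ 2 -> False.
Proof.
move=> hr hs hx orr os ox he hc H.
have [a [ha ea]] := pow4_mod8 hr orr.
have [b [hb eb]] := pow4_mod8 hs os.
apply: ox; apply: (@ev_pow x 1) => //; apply: (ev_unitl hc); first by gauss.
rewrite -H ea eb; case: he => ->.
  have -> : 1 + 8 * a + 1 * (1 + 8 * b) = 2 * (1 + 4 * a + 4 * b) by ring.
  by apply: ev_mul2; gauss.
have -> : 1 + 8 * a + (-1) * (1 + 8 * b) = 2 * (4 * a - 4 * b) by ring.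
by apply: ev_mul2; gauss.
Qed.

Lemma QAodd x y z : gaussint x -> gaussint y -> gaussint z ->
  ~ ev x -> ~ ev y -> x ^+ 4 + y ^+ 4 = z ^+ 2 -> False.
Proof.
move=> hx hy hz ox oy H.
have [a [ha ea]] := pow4_mod8 hx ox.
have [b [hb eb]] := pow4_mod8 hy oy.
have ez : z ^+ 2 = 2 * (1 + 4 * (a + b)) by rewrite -H ea eb; ring.
have [w hw zw] : ev z.
  apply: (@ev_pow z 1) => //; rewrite ez; apply: ev_mul2; gauss.
have ew : 'i * w ^+ 2 = 1 + 4 * (a + b).
  apply: (@cancel_l 2); first by rewrite pnatr_eq0.
  by rewrite -ez zw exprMn lam2; ring.
have ow : ~ ev w.
  move=> evw; apply: not_ev1.
  have -> : (1 : algC) = 'i * w ^+ 2 - 2 * (2 * (a + b)) by rewrite ew; ring.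
  apply: ev_sub; last by apply: ev_mul2; gauss.
  by apply: ev_mull => //; rewrite expr2; apply: ev_mulr.
have [sg [t [hsg ht et]]] := sq_mod4' hw ow.
apply: (@not4 ('i * sg)).
  by case: hsg => ->; rewrite ?mulr1 ?mulrN1; auto.
exists ('i * t - a - b); first by gauss.
rewrite et in ew; apply: (lin (esym ew)); ring.
Qed.

Lemma lin2 (a b c d k m : algC) : c = d -> a - b = k * (c - d) + m * ('i ^+ 2 + 1) -> a = b.
Proof.
by move=> ->; rewrite subrr mulr0 add0r sqi addNr mulr0 => /eqP; rewrite subr_eq0 => /eqP.
Qed.

Lemma guE e : (e = 1 \/ e = -1) -> gu e.
Proof. by case=> ->; [exact: gu1 | apply: guN; exact: gu1]. Qed.

Lemma gu_mi : gu (- 'i). Proof. by apply: guN; exact: gui. Qed.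

Definition IHtype e n := forall x y z, (nrm y < n)%N -> gaussint x -> gaussint y ->
  gaussint z -> cop x y -> ~ ev x -> ev y -> y != 0 -> x ^+ 4 + e * y ^+ 4 = z ^+ 2 -> False.

Lemma irr_gt1 p : girr p -> (1 < nrm p)%N. Proof. by case. Qed.
Lemma irr_int p : girr p -> gaussint p. Proof. by case. Qed.

Lemma Mstep e n x y' p q : (e = 1 \/ e = -1) -> IHtype e n ->
  (nrm (lam * y')%R <= n)%N -> gaussint x -> gaussint y' -> gaussint p -> gaussint q ->
  cop x (lam * y') -> ~ ev x -> y' != 0 -> ~ ev p ->
  p * q = e * y' ^+ 4 -> q - p = - 'i * x ^+ 2 -> False.
Proof.
move=> he IH len hx hy' hp hq cxy ox y'0 op epq eqp.
have eu := guE he; have he' : gaussint e by case: eu.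
have cpq : cop p q.
  apply: cop_irr => pi ipi pp pq.
  have piy' : gdvd pi y'.
    apply: (euclidX ipi hy' (n := 4)); apply: (euclid_unit ipi eu); first by gauss.
    by rewrite -epq; apply: gdvdMr.
  have pix : gdvd pi x.
    apply: (euclidX ipi hx (n := 2)); apply: (euclid_unit ipi gu_mi); first by gauss.
    by rewrite -eqp; apply: gdvdB.
  have := cxy pi (irr_int ipi) pix (gdvdMl gaussint_lam piy').
  by have := irr_gt1 ipi; move=> h1 h2; rewrite h2 in h1.
have [al [be [r [s [[alu beu] albe [hr hs] [ep eq] ey']]]]] := sq4 hp hq hy' eu epq cpq y'0.
have ebe : be = al^* * e.
  by rewrite -albe mulrA nrm_unitE ?mul1r //; case: alu.
have or : ~ ev r.
  move=> evr; apply: op; rewrite ep; apply: ev_mull; first by case: alu.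
  by rewrite (_ : r ^+ 4 = r * r ^+ 3); [apply: ev_mulr; gauss | rewrite -exprS].
have s0 : s != 0 by apply: contraNneq y'0 => s0; rewrite ey' s0 mulr0.
have r0 : r != 0 by apply: contraNneq y'0 => r0; rewrite ey' r0 mul0r.
have lts : (nrm s < n)%N.
  move: len; rewrite ey' (nrmM gaussint_lam (gaussintM hr hs)) (nrmM hr hs) nrm_lam.
  have : nrm r != 0%N by rewrite nrm_eq0.
  have : nrm s != 0%N by rewrite nrm_eq0.
  nia.
have Hq : be * s ^+ 4 - al * r ^+ 4 = - 'i * x ^+ 2 by rewrite -eq -ep.
have hal' := proj1 alu; have hbe' := proj1 beu.
have cop_rs : cop r s.
  apply: (cop_dvdl (a := p)); first by exists (al * r ^+ 3); [gauss | rewrite ep; ring].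
  apply: (cop_dvdr (b := q)); first by exists (be * s ^+ 3); [gauss | rewrite eq; ring].
  exact: cpq.
have e' : (- e = 1 \/ - e = -1) by case: he => ->; rewrite ?opprK; auto.
case: (unit_cases (proj1 alu) (proj2 alu)) => hal; rewrite hal in ebe Hq.
-
  rewrite conjC1 mul1r in ebe; rewrite ebe in Hq.
  have H' : r ^+ 4 + (- e) * s ^+ 4 = 'i * x ^+ 2.
    by apply: (lin2 (k := -1) (m := 0) Hq); ring.
  case: (classic (ev s)) => evs.
    by apply: (L1 hr hs hx or evs ox e' _ H'); left.
  by apply: (L2 hr hs hx or evs ox e' gui H').
-
  rewrite rmorphN1 mulN1r in ebe; rewrite ebe in Hq.
  have H' : r ^+ 4 + (- e) * s ^+ 4 = - 'i * x ^+ 2.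
    by apply: (lin2 (k := 1) (m := 0) Hq); ring.
  case: (classic (ev s)) => evs.
    by apply: (L1 hr hs hx or evs ox e' _ H'); right.
  by apply: (L2 hr hs hx or evs ox e' gu_mi H').
-
  rewrite conjCi in ebe; rewrite ebe in Hq.
  have H' : r ^+ 4 + e * s ^+ 4 = 1 * x ^+ 2.
    by apply: (lin2 (k := 'i) (m := r ^+ 4 + e * s ^+ 4 - x ^+ 2) Hq); ring.
  case: (classic (ev s)) => evs.
    by apply: (IH r s x lts hr hs hx cop_rs or evs s0); rewrite H' mul1r.
  by apply: (L2 hr hs hx or evs ox he gu1 H').
-
  have cj : (- 'i : algC)^* = 'i by rewrite raddfN /= conjCi opprK.
  rewrite cj in ebe; rewrite ebe in Hq.
  have H' : r ^+ 4 + e * s ^+ 4 = -1 * x ^+ 2.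
    by apply: (lin2 (k := - 'i) (m := r ^+ 4 + e * s ^+ 4 + x ^+ 2) Hq); ring.
  case: (classic (ev s)) => evs.
    apply: (IH r s ('i * x) lts hr hs _ cop_rs or evs s0); first by gauss.
    rewrite H' exprMn sqi; ring.
  by apply: (L2 hr hs hx or evs ox he (guN gu1) H').
Qed.

Lemma ev_pow4 y : gaussint y -> ev y -> ev (y ^+ 4).
Proof. by move=> hy evy; rewrite exprS; apply: ev_mulr => //; gauss. Qed.

Lemma M1 e : (e = 1 \/ e = -1) -> forall n, IHtype e n.
Proof.
move=> he; elim=> // n IH x y z ltn hx hy hz cxy ox evy y0 H.
have eu := guE he; have he' : gaussint e by case: eu.
case: (evy) => y' hy' ey.
have y'0 : y' != 0 by apply: contraNneq y0 => h; rewrite ey h mulr0.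
have ox2 : ~ ev (x ^+ 2) by apply: odd_pow.
have oz : ~ ev z.
  move=> evz; apply: ox; apply: (@ev_pow x 3) => //.
  have -> : x ^+ 4 = z ^+ 2 - e * y ^+ 4 by rewrite -H; ring.
  apply: ev_sub; first by rewrite expr2; apply: ev_mulr.
  by apply: ev_mull => //; apply: ev_pow4.
have evP : ev (z - x ^+ 2) by apply: odd_sub => //; gauss.
have evQ : ev (z + x ^+ 2).
  have -> : z + x ^+ 2 = (z - x ^+ 2) + 2 * x ^+ 2 by ring.
  by apply: ev_add => //; apply: ev_mul2; gauss.
case: evP => p hp eP; case: evQ => q hq eQ.
have lam20 : lam ^+ 2 != 0 by rewrite expf_neq0 // lam0.
have epq : p * q = e * lam ^+ 2 * y' ^+ 4.
  apply: (@cancel_l (lam ^+ 2)) => //.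
  transitivity ((lam * p) * (lam * q)); first by ring.
  rewrite -eP -eQ.
  transitivity (z ^+ 2 - x ^+ 4); first by ring.
  by rewrite -H ey; ring.
have eqp : q - p = (1 - 'i) * x ^+ 2.
  apply: (cancel_l lam0).
  transitivity ((z + x ^+ 2) - (z - x ^+ 2)); first by rewrite eP eQ; ring.
  have -> : (z + x ^+ 2) - (z - x ^+ 2) = 2 * x ^+ 2 by ring.
  by rewrite two_lam; ring.
have e1i : 1 - 'i = lam * - 'i.
  rewrite /lam; apply/eqP; rewrite -subr_eq0; apply/eqP.
  transitivity ('i ^+ 2 + 1 : algC); first by ring.
  by rewrite sqi addNr.
have evqp : ev (q - p) by rewrite eqp e1i -mulrA; apply: ev_mulr; [gauss | exact: ev_lam].
have evpq : ev (p * q).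
  by rewrite epq; exists (e * lam * y' ^+ 4); [gauss | rewrite /lam; ring].
have [evp evq] : ev p /\ ev q.
  case: (euclid girr_lam hp hq evpq) => h.
    split => //; rewrite (_ : q = (q - p) + p); [exact: ev_add | ring].
  split => //; rewrite (_ : p = q - (q - p)); [exact: ev_sub | ring].
case: evp => p' hp' ep'; case: evq => q' hq' eq'.
have ep'q' : p' * q' = e * y' ^+ 4.
  apply: (@cancel_l (lam ^+ 2)) => //.
  transitivity (p * q); first by rewrite ep' eq'; ring.
  by rewrite epq; ring.
have eq'p' : q' - p' = - 'i * x ^+ 2.
  apply: (cancel_l lam0).
  transitivity (q - p); first by rewrite ep' eq'; ring.
  by rewrite eqp e1i; ring.
have len : (nrm (lam * y')%R <= n)%N by rewrite -ey -ltnS.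
have IH' : IHtype e n by exact: IH.
case: (classic (ev p')) => evp'.
  case: (classic (ev q')) => evq'.
    apply: ox2; apply: (ev_unitl gu_mi); first by gauss.
    by rewrite -eq'p'; exact: ev_sub.
  apply: (Mstep he IH' len hx hy' (p := - q') (q := - p')) => //; try gauss.
  - by rewrite ey in cxy.
  - by move=> h; apply: evq'; apply: (ev_unitl (guN gu1) hq'); rewrite mulN1r.
  - by rewrite mulrNN mulrC.
  - by rewrite opprK addrC.
apply: (Mstep he IH' len hx hy' (p := p') (q := q')) => //.
by rewrite ey in cxy.
Qed.

Lemma M1' e x y z : (e = 1 \/ e = -1) -> gaussint x -> gaussint y ->
  gaussint z -> cop x y -> ~ ev x -> ev y -> y != 0 -> x ^+ 4 + e * y ^+ 4 = z ^+ 2 -> False.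
Proof. by move=> he; apply: (M1 he (n := (nrm y).+1)). Qed.

Lemma cop_not_both_ev x y : cop x y -> ev x -> ev y -> False.
Proof. by move=> c ex ey; have := c lam gaussint_lam ex ey; rewrite nrm_lam. Qed.

Lemma QA_cop x y z : gaussint x -> gaussint y -> gaussint z -> cop x y ->
  x != 0 -> y != 0 -> x ^+ 4 + y ^+ 4 = z ^+ 2 -> False.
Proof.
move=> hx hy hz cxy x0 y0 H.
case: (classic (ev x)) => ex; case: (classic (ev y)) => ey.
- exact: cop_not_both_ev cxy ex ey.
- apply: (M1' (e := 1) (x := y) (y := x) (z := z)) => //; first by left.
    exact: cop_sym.
  by rewrite mul1r addrC.
- apply: (M1' (e := 1) (x := x) (y := y) (z := z)) => //; first by left.
  by rewrite mul1r.
- exact: QAodd hx hy hz ex ey H.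
Qed.

Lemma irr_dvd_lam p : girr p -> gdvd p lam -> gdvd lam p.
Proof.
move=> ip pl; have [hp p1 _] := ip.
have [_ _ hl] := girr_lam.
have [h|h] := hl p hp pl; first by rewrite h in p1.
by apply: assoc_dvd => //; exact: lam0.
Qed.

Lemma two_lam2 : 2 = lam * (lam * - 'i).
Proof.
rewrite mulrA -expr2 lam2; apply/eqP; rewrite -subr_eq0; apply/eqP.
transitivity (2 * ('i ^+ 2 + 1) : algC); first by ring.
by rewrite sqi addNr mulr0.
Qed.

Lemma irr_dvd2 p w : girr p -> gaussint w -> gdvd p (2 * w) -> gdvd lam p \/ gdvd p w.
Proof.
move=> ip hw h; rewrite two_lam2 -!mulrA in h.
case: (euclid ip gaussint_lam _ h) => [|pl|h2]; first by gauss.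
  by left; apply: irr_dvd_lam.
case: (euclid ip gaussint_lam _ h2) => [|pl|h3]; first by gauss.
  by left; apply: irr_dvd_lam.
by right; apply: (euclid_unit ip gu_mi hw h3).
Qed.

Lemma i_mi : 'i * - 'i = 1 :> algC.
Proof. by rewrite mulrN mulCii opprK. Qed.

Lemma i4 : 'i ^+ 4 = 1 :> algC.
Proof. by apply: unit4 => //; case: gui. Qed.

Lemma QCodd x y z : gaussint x -> gaussint y -> gaussint z -> cop x y ->
  ~ ev x -> ~ ev y -> z != 0 -> x ^+ 4 - y ^+ 4 = z ^+ 2 -> False.
Proof.
move=> hx hy hz cxy ox oy z0 H.
have [s1 [a [hs1 ha ea]]] := sq_mod4' hx ox.
have [y0 [hy0 oy0 cxy0 e4 [b [hb eb]]]] : exists y0, [/\ gaussint y0, ~ ev y0, cop x y0,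
    y0 ^+ 4 = y ^+ 4 & exists b, gaussint b /\ y0 ^+ 2 = s1 + 4 * b].
  have [s2 [b [hs2 hb eb]]] := sq_mod4' hy oy.
  have hiy : gaussint ('i * y) by gauss.
  have oiy : ~ ev ('i * y) by move/(ev_unitl gui hy).
  have ciy : cop x ('i * y).
    apply: (cop_dvdr (b := y)) => //; exists (- 'i); first by gauss.
    by rewrite -mulrA [y * _]mulrC mulrA i_mi mul1r.
  have iy4 : ('i * y) ^+ 4 = y ^+ 4 by rewrite exprMn i4 mul1r.
  have iy2 : ('i * y) ^+ 2 = - y ^+ 2 by rewrite exprMn sqi mulN1r.
  case: hs1 => es1; case: hs2 => es2; rewrite es1 in ea; rewrite es2 in eb.
  - by exists y; split => //; exists b; rewrite es1.
  - exists ('i * y); split => //; exists (- b); split; first by gauss.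
    by rewrite iy2 eb es1; ring.
  - exists ('i * y); split => //; exists (- b); split; first by gauss.
    by rewrite iy2 eb es1; ring.
  - by exists y; split => //; exists b; rewrite es1.
have hs1' : gaussint s1 by case: hs1 => ->; gauss.
pose C := s1 + 2 * (a + b).
pose D := 4 * (a - b).
have hC : gaussint C by rewrite /C; gauss.
have hD : gaussint D by rewrite /D; gauss.
have oC : ~ ev C.
  move=> evC; apply: (odd_unit (u := s1)); first by case: hs1 => ->; [exact: gu1 | apply: guN; exact: gu1].
  have -> : s1 = C - 2 * (a + b) by rewrite /C; ring.
  by apply: ev_sub => //; apply: ev_mul2; gauss.
have ex4 : x ^+ 4 = (x ^+ 2) ^+ 2 by rewrite -exprM.
have ey4 : y0 ^+ 4 = (y0 ^+ 2) ^+ 2 by rewrite -exprM.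
have hz2 : z ^+ 2 = 2 * (C * D).
  by rewrite -H -e4 ex4 ey4 ea eb /C /D; ring.
have [w hw ezw] : ev z.
  by apply: (@ev_pow z 1) => //; rewrite hz2; apply: ev_mul2; gauss.
have w0 : w != 0 by apply: contraNneq z0 => w0; rewrite ezw w0 mulr0.
have ew : C * D = 'i * w ^+ 2.
  apply: (@cancel_l 2); first by rewrite pnatr_eq0.
  by rewrite -hz2 ezw exprMn lam2; ring.
have cCD : cop C D.
  apply: cop_irr => p ip pC pD.
  have [hp p1 _] := ip.
  have p2x : gdvd p (2 * x ^+ 2).
    by rewrite (_ : 2 * x ^+ 2 = 2 * C + D); [apply: gdvdD => //; apply: gdvdMl | rewrite /C /D ea; ring].
  have p2y : gdvd p (2 * y0 ^+ 2).
    by rewrite (_ : 2 * y0 ^+ 2 = 2 * C - D); [apply: gdvdB => //; apply: gdvdMl | rewrite /C /D eb; ring].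
  case: (irr_dvd2 ip _ p2x); first by gauss.
    by move=> lp; apply: oC; apply: gdvd_trans lp pC.
  move=> px; case: (irr_dvd2 ip _ p2y); first by gauss.
    by move=> lp; apply: oC; apply: gdvd_trans lp pC.
  move=> py.
  have := cxy0 p hp (euclidX ip hx px) (euclidX ip hy0 py).
  by move=> h; rewrite h in p1.
have [g [dl [c [d [[gu' dlu] gdl [hc hd] [eC eD] ewcd]]]]] := sq2 hC hD hw gui ew cCD w0.
have hg := proj1 gu'; have hdl := proj1 dlu.
have evD : ev D.
  by rewrite /D (_ : 4 * (a - b) = 2 * (2 * (a - b))); [apply: ev_mul2; gauss | ring].
have evd : ev d.
  apply: (@ev_pow d 1) => //; apply: (ev_unitl dlu) => //; first by gauss.
  by rewrite -eD.
case: evd => d1 hd1 ed.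
have dl2 : gu (dl * 'i) by apply: guM => //; exact: gui.
have evd1 : ev d1.
  apply: (@ev_pow d1 1) => //; apply: (ev_unitl dl2) => //; first by gauss.
  have -> : dl * 'i * d1 ^+ 2 = 2 * (a - b).
    apply: (@cancel_l 2); first by rewrite pnatr_eq0.
    rewrite (_ : 2 * (2 * (a - b)) = D); last by rewrite /D; ring.
    by rewrite eD ed exprMn lam2; ring.
  by apply: ev_mul2; gauss.
have d10 : d1 != 0.
  by apply: contraNneq w0 => h; rewrite ewcd ed h mulr0 mulr0.
have oc : ~ ev c.
  move=> evc; apply: oC; rewrite eC; apply: ev_mull => //.
  by rewrite expr2; apply: ev_mulr.
have ccd1 : cop c d1.
  apply: (cop_dvdl (a := C)); first by exists (g * c); [gauss | rewrite eC; ring].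
  apply: (cop_dvdr (b := D)); first by exists (dl * lam ^+ 2 * d1); [gauss | rewrite eD ed; ring].
  exact: cCD.
have hW : gaussint (x * y0) by gauss.
have G : g ^+ 2 * c ^+ 4 + dl ^+ 2 * d1 ^+ 4 = (x * y0) ^+ 2.
  apply: (@cancel_l 4); first by rewrite pnatr_eq0.
  transitivity ((2 * C) ^+ 2 - D ^+ 2).
    rewrite eC eD ed; transitivity (4 * g ^+ 2 * c ^+ 4 - dl ^+ 2 * lam ^+ 4 * d1 ^+ 4); [rewrite lam4; ring | ring].
  rewrite (_ : 2 * C = x ^+ 2 + y0 ^+ 2); last by rewrite ea eb /C; ring.
  rewrite (_ : D = x ^+ 2 - y0 ^+ 2); last by rewrite ea eb /D; ring.
  ring.
have edl : dl = g^* * 'i by rewrite -gdl mulrA nrm_unitE ?mul1r //; case: gu'.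
have em1 : ((-1 : algC) = 1 \/ (-1 : algC) = -1) by right.
case: (unit_cases hg (proj2 gu')) => eg; rewrite eg in edl G; rewrite edl in G.
- rewrite conjC1 mul1r expr1n mul1r sqi in G.
  by apply: (M1' em1 hc hd1 hW ccd1 oc evd1 d10).
- rewrite rmorphN1 mulN1r !sqrrN expr1n mul1r sqi in G.
  by apply: (M1' em1 hc hd1 hW ccd1 oc evd1 d10).
- rewrite conjCi mulNr mulCii opprK expr1n mul1r sqi in G.
  apply: (M1' em1 hc hd1 (z := 'i * (x * y0)) _ ccd1 oc evd1 d10); first by gauss.
  rewrite exprMn sqi -G; ring.
- have cj : (- 'i : algC)^* = 'i by rewrite raddfN /= conjCi opprK.
  rewrite cj mulCii !sqrrN expr1n sqi mul1r in G.
  apply: (M1' em1 hc hd1 (z := 'i * (x * y0)) _ ccd1 oc evd1 d10); first by gauss.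
  rewrite exprMn sqi -G; ring.
Qed.

Lemma QC_cop x y z : gaussint x -> gaussint y -> gaussint z -> cop x y ->
  x != 0 -> y != 0 -> z != 0 -> x ^+ 4 - y ^+ 4 = z ^+ 2 -> False.
Proof.
move=> hx hy hz cxy x0 y0 z0 H.
case: (classic (ev x)) => ex; case: (classic (ev y)) => ey.
- exact: cop_not_both_ev cxy ex ey.
- apply: (M1' (e := -1) (x := y) (y := x) (z := 'i * z)) => //; first by right.
  + by gauss.
  + exact: cop_sym.
  + by rewrite exprMn sqi -H; ring.
- apply: (M1' (e := -1) (x := x) (y := y) (z := z)) => //; first by right.
  by rewrite -H; ring.
- exact: (QCodd hx hy hz cxy ex ey z0 H).
Qed.

Lemma reduce_all e : (e = 1 \/ e = -1) ->
  (forall x y z, gaussint x -> gaussint y -> gaussint z -> cop x y -> x != 0 -> y != 0 ->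
     z != 0 -> x ^+ 4 + e * y ^+ 4 = z ^+ 2 -> False) ->
  forall x y z, gaussint x -> gaussint y -> gaussint z -> x ^+ 4 + e * y ^+ 4 = z ^+ 2 ->
  x * y * z = 0.
Proof.
move=> he Hc x; have [n] := ubnP (nrm x); elim: n x => // n IH x ltn y z hx hy hz H.
have he' : gaussint e by case: he => ->; gauss.
apply/eqP; apply: contraT => nz.
have [x0 y0 z0] : [/\ x != 0, y != 0 & z != 0].
  by move: nz; rewrite !mulf_eq0 !negb_or => /andP[/andP[-> ->] ->].
case: (classic (cop x y)) => cxy; first by case: (Hc x y z hx hy hz cxy x0 y0 z0 H).
have : ~ (forall d, gaussint d -> gdvd d x -> gdvd d y -> nrm d = 1%N) by [].
move/not_all_ex_not => [d hd].
have [gd hd1] := imply_to_and _ _ hd.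
have [dx hd2] := imply_to_and _ _ hd1.
have [dy nd1] := imply_to_and _ _ hd2.
have nd0 : nrm d != 0%N.
  rewrite nrm_eq0 //; apply: contraNneq x0 => d0; move: dx; rewrite d0 => -[q _ ->].
  by rewrite mul0r.
have [p ip pd] : exists2 p, girr p & gdvd p d.
  by apply: irr_exists => //; move: nd0 nd1; lia.
have [hp p1 _] := ip; have p0 := irr_neq0 ip.
have [x1 hx1 ex] := gdvd_trans pd dx.
have [y1 hy1 ey] := gdvd_trans pd dy.
have H1 : z ^+ 2 = p ^+ 2 * (p ^+ 2 * (x1 ^+ 4 + e * y1 ^+ 4)) by rewrite -H ex ey; ring.
have pz : gdvd p z.
  apply: (@euclidX p z 2 ip hz); rewrite H1; apply: gdvdMr; first by gauss.
  by rewrite expr2; apply: gdvdMr => //; exact: gdvd_refl.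
case: pz => z1 hz1 ez.
have H2 : z1 ^+ 2 = p ^+ 2 * (x1 ^+ 4 + e * y1 ^+ 4).
  apply: (@cancel_l (p ^+ 2)); first by rewrite expf_neq0.
  by rewrite -H1 ez; ring.
have pz1 : gdvd p z1.
  apply: (@euclidX p z1 2 ip hz1); rewrite H2; apply: gdvdMr; first by gauss.
  by rewrite expr2; apply: gdvdMr => //; exact: gdvd_refl.
case: pz1 => z2 hz2 ez1.
have H3 : x1 ^+ 4 + e * y1 ^+ 4 = z2 ^+ 2.
  apply: (@cancel_l (p ^+ 2)); first by rewrite expf_neq0.
  by rewrite -H2 ez1; ring.
have x10 : x1 != 0 by apply: contraNneq x0 => h; rewrite ex h mulr0.
have lt1 : (nrm x1 < n)%N.
  move: ltn; rewrite ex nrmM // => ltn.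
  have : (0 < nrm x1)%N by rewrite lt0n nrm_eq0.
  move/(ltn_Pmull p1) => h; rewrite -ltnS; exact: leq_trans h ltn.
have h := IH x1 lt1 y1 z2 hx1 hy1 hz2 H3.
move: nz; rewrite ex ey ez ez1 (_ : _ * _ = p ^+ 4 * (x1 * y1 * z2)); last by ring.
by rewrite h mulr0 eqxx.
Qed.

Lemma QA_all x y z : gaussint x -> gaussint y -> gaussint z ->
  x ^+ 4 + y ^+ 4 = z ^+ 2 -> x * y * z = 0.
Proof.
move=> hx hy hz H; apply: (@reduce_all 1) => //; first by left.
  move=> a b c ha hb hc cab a0 b0 c0 Habc; apply: (QA_cop ha hb hc cab a0 b0).
  by rewrite -Habc mul1r.
by rewrite mul1r.
Qed.

Lemma QC_all x y z : gaussint x -> gaussint y -> gaussint z ->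
  x ^+ 4 - y ^+ 4 = z ^+ 2 -> x * y * z = 0.
Proof.
move=> hx hy hz H; apply: (@reduce_all (-1)) => //; first by right.
  move=> a b c ha hb hc cab a0 b0 c0 Habc; apply: (QC_cop ha hb hc cab a0 b0 c0).
  by rewrite -Habc mulN1r.
by rewrite mulN1r.
Qed.

Lemma part1 (x y z : algC) : gaussint x -> gaussint y -> gaussint z ->
  x ^+ 4 - y ^+ 4 = 'i * z ^+ 2 -> x * y * z = 0.
Proof.
move=> hx hy hz H.
have hz4 : z ^+ 4 = - (x ^+ 4 - y ^+ 4) ^+ 2.
  by rewrite H exprMn sqi -exprM; ring.
have hT : gaussint (x ^+ 2 + y ^+ 2) by gauss.
have hW : gaussint (2 * x * y * (x ^+ 2 + y ^+ 2)) by gauss.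
have Hid : z ^+ 4 + (x ^+ 2 + y ^+ 2) ^+ 4 = (2 * x * y * (x ^+ 2 + y ^+ 2)) ^+ 2.
  by rewrite hz4; ring.
have h0 := QA_all hz hT hW Hid.
have [->|z0] := eqVneq z 0; first by rewrite mulr0.
have [->|x0] := eqVneq x 0; first by rewrite !mul0r.
have [->|y0] := eqVneq y 0; first by rewrite mulr0 mul0r.
exfalso.
have hs : x ^+ 2 + y ^+ 2 = 0.
  move/eqP: h0; rewrite !mulf_eq0 pnatr_eq0 (negPf z0) (negPf x0) (negPf y0) /=.
  by rewrite orbb => /eqP.
have : 'i * z ^+ 2 = 0.
  rewrite -H (_ : x ^+ 4 - y ^+ 4 = (x ^+ 2 + y ^+ 2) * (x ^+ 2 - y ^+ 2)); last by ring.
  by rewrite hs mul0r.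
move/eqP; rewrite mulf_eq0 (negPf (neq0Ci _)) /= expf_eq0 /= (negPf z0).
done.
Qed.

Lemma mem4E (u : algC) : (u \in [:: 1; -1; 'i; - 'i]) = [|| u == 1, u == -1, u == 'i | u == - 'i].
Proof. by rewrite !inE. Qed.

Lemma gu_mem4 u : gu u -> u \in [:: 1; -1; 'i; - 'i].
Proof.
move=> [hu h1]; rewrite mem4E.
by case: (unit_cases hu h1) => ->; rewrite eqxx ?orbT.
Qed.

Lemma mem4_gu u : u \in [:: 1; -1; 'i; - 'i] -> gu u.
Proof.
rewrite mem4E => /or4P [] /eqP ->; [exact: gu1 | apply: guN; exact: gu1 | exact: gui | exact: gu_mi].
Qed.

Lemma root4 (c : algC) : c ^+ 4 = 1 -> gu c.
Proof.
move=> h.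
have e : (c - 1) * (c + 1) * ((c - 'i) * (c + 'i)) = 0.
  transitivity ((c ^+ 4 - 1) + (1 - c ^+ 2) * ('i ^+ 2 + 1)); first by ring.
  by rewrite h subrr sqi addNr mulr0 addr0.
move/eqP: e; rewrite !mulf_eq0 !subr_eq0 !addr_eq0 -!orbA => /or4P [] /eqP ->.
- exact: gu1.
- by apply: guN; exact: gu1.
- exact: gui.
- exact: gu_mi.
Qed.

Lemma one_mi_neq0 : (1 - 'i : algC) != 0.
Proof.
apply/eqP => /eqP; rewrite subr_eq0 => /eqP hi.
have := sqi; rewrite -hi expr1n => /eqP; rewrite -subr_eq0 opprK -mulr2n mulrn_eq0 oner_eq0.
done.
Qed.

Lemma z_form (z : algC) : z = 1 - 'i \/ z = - (1 - 'i) ->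
  z \in [:: 'i * (1 + 'i); - ('i * (1 + 'i))].
Proof.
have e : 'i * (1 + 'i) = - (1 - 'i) :> algC.
  apply/eqP; rewrite -subr_eq0; apply/eqP.
  transitivity ('i ^+ 2 + 1 : algC); first by ring.
  by rewrite sqi addNr.
by rewrite !inE e opprK; case=> ->; rewrite eqxx ?orbT.
Qed.

Lemma part2_fwd (x y z : algC) : gaussint x -> gaussint y -> gaussint z ->
  x ^+ 4 + y ^+ 4 = 'i * z ^+ 2 -> x * y * z != 0 -> gcoprime3 x y z ->
  [/\ x \in [:: 1; -1; 'i; - 'i], y \in [:: 1; -1; 'i; - 'i]
         & z \in [:: 'i * (1 + 'i); - ('i * (1 + 'i))]].
Proof.
move=> hx hy hz H nz gc.
have [x0 y0 z0] : [/\ x != 0, y != 0 & z != 0].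
  by move: nz; rewrite !mulf_eq0 !negb_or => /andP[/andP[-> ->] ->].
have hz2 : z ^+ 2 = - 'i * (x ^+ 4 + y ^+ 4) by rewrite H mulrA mulNr mulCii opprK mul1r.
pose S := z + (1 - 'i) * x * y.
pose T := x ^+ 2 - y ^+ 2.
pose W := (1 - 'i) * S * (x ^+ 2 + y ^+ 2).
have hS : gaussint S by rewrite /S; gauss.
have hT : gaussint T by rewrite /T; gauss.
have hW : gaussint W by rewrite /W; gauss.
have hid : S ^+ 4 - T ^+ 4 = W ^+ 2.
  apply/eqP; rewrite -subr_eq0; apply/eqP.
  rewrite /W /S /T.
  transitivity ((- (4 * 'i * x * y * z) - (8 * 'i * x ^+ 2 * y ^+ 2) + ('i * x ^+ 4) + ('i * y ^+ 4) + (4 * 'i ^+ 2 * x ^+ 2 * y ^+ 2) - ('i ^+ 2 * x ^+ 4) - ('i ^+ 2 * y ^+ 4) + (4 * x * y * z) + (4 * x ^+ 2 * y ^+ 2) - (x ^+ 4) - (y ^+ 4) + (z ^+ 2))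
     * (z ^+ 2 - (- 'i * (x ^+ 4 + y ^+ 4)))
     + ((2 * 'i * x * y ^+ 5 * z) + (6 * 'i * x ^+ 4 * y ^+ 4) + (2 * 'i * x ^+ 5 * y * z) + ('i * x ^+ 8) + ('i * y ^+ 8) - ('i ^+ 2 * x ^+ 2 * y ^+ 6) - ('i ^+ 2 * x ^+ 4 * y ^+ 4) - ('i ^+ 2 * x ^+ 6 * y ^+ 2) - (2 * x * y ^+ 5 * z) + (3 * x ^+ 2 * y ^+ 6) - (7 * x ^+ 4 * y ^+ 4) - (2 * x ^+ 5 * y * z) + (3 * x ^+ 6 * y ^+ 2) - (x ^+ 8) - (y ^+ 8))
     * ('i ^+ 2 + 1)); first by ring.
  by rewrite -hz2 subrr sqi addNr !mulr0 addr0.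
have h0 := QC_all hS hT hW hid.
have hxy : x ^+ 2 = y ^+ 2 \/ x ^+ 2 = - y ^+ 2.
  have caseS : S = 0 -> x ^+ 2 = y ^+ 2.
    move=> S0; have ez : z = - ((1 - 'i) * x * y) by apply/eqP; rewrite -addr_eq0; apply/eqP.
    rewrite ez sqrrN in hz2.
    have : (x ^+ 2 - y ^+ 2) ^+ 2 = 0.
      apply: (lin2 (k := - 'i) (m := ('i * x ^+ 2 * y ^+ 2) - (2 * x ^+ 2 * y ^+ 2) + (x ^+ 4) + (y ^+ 4)) hz2).
      ring.
    by move/eqP; rewrite sqrf_eq0 subr_eq0 => /eqP.
  move/eqP: h0; rewrite !mulf_eq0 -!orbA => /or3P [/eqP S0|/eqP T0|].
  - by left; apply: caseS.
  - by left; apply/eqP; rewrite -subr_eq0; apply/eqP.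
  rewrite (negPf one_mi_neq0) /= => /orP [/eqP S0|].
    by left; apply: caseS.
  by rewrite addr_eq0 => /eqP; right.
have x4 : y ^+ 4 = x ^+ 4.
  have e4 : forall w : algC, w ^+ 4 = (w ^+ 2) ^+ 2 by move=> w; rewrite -exprM.
  by rewrite !e4; case: hxy => ->; rewrite ?sqrrN.
pose c := y / x.
have ey : y = x * c by rewrite /c mulrC divfK.
have c4 : c ^+ 4 = 1 by rewrite /c exprMn exprVn x4 mulfV // expf_neq0.
have cu := root4 c4.
have ez : z = (1 - 'i) * x ^+ 2 \/ z = - ((1 - 'i) * x ^+ 2).
  have : (z - (1 - 'i) * x ^+ 2) * (z + (1 - 'i) * x ^+ 2) = 0.
    transitivity (z ^+ 2 - (- 'i * (x ^+ 4 + x ^+ 4)) - x ^+ 4 * ('i ^+ 2 + 1)); first by ring.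
    by rewrite -{2}x4 -hz2 subrr sqi addNr mulr0 subr0.
  move/eqP; rewrite mulf_eq0 subr_eq0 addr_eq0 => /orP [/eqP h|/eqP h]; by [left | right].
have hxz : gdvd x z.
  case: ez => ->; [exists ((1 - 'i) * x) | exists (- ((1 - 'i) * x))]; try gauss; ring.
have hxy' : gdvd x y by exists c => //; case: cu.
have [_ [q hq eq1]] := gc x hx (gdvd_refl x) hxy' hxz.
have xu : nrm x = 1%N.
  have := congr1 nrm eq1; rewrite nrmM // => /esym/eqP.
  rewrite (_ : nrm 1 = 1%N); last by rewrite /nrm normr1 expr1n truncn1.
  by rewrite muln_eq1 => /andP [/eqP].
have xgu : gu x by split.
split.
- exact: gu_mem4.
- by rewrite ey; apply: gu_mem4; apply: guM.
apply: z_form.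
case: (unit_cases hx xu) => ex; rewrite ex ?sqrrN ?sqi ?expr1n in ez.
- by rewrite mulr1 in ez.
- by rewrite mulr1 in ez.
- by rewrite mulrN1 opprK in ez; case: ez; auto.
- by rewrite mulrN1 opprK in ez; case: ez; auto.
Qed.

Lemma part2_bwd (x y z : algC) : x \in [:: 1; -1; 'i; - 'i] -> y \in [:: 1; -1; 'i; - 'i] ->
  z \in [:: 'i * (1 + 'i); - ('i * (1 + 'i))] ->
  [/\ x ^+ 4 + y ^+ 4 = 'i * z ^+ 2, x * y * z != 0 & gcoprime3 x y z].
Proof.
move=> /mem4_gu xu /mem4_gu yu hzl.
have e0 : ('i * (1 + 'i)) ^+ 2 = - 2 * 'i :> algC.
  apply/eqP; rewrite -subr_eq0; apply/eqP.
  transitivity ((2 * 'i + 'i ^+ 2) * ('i ^+ 2 + 1) : algC); first by ring.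
  by rewrite sqi addNr mulr0.
have ez2 : z ^+ 2 = - 2 * 'i.
  by move: hzl; rewrite !inE => /orP [] /eqP ->; rewrite ?sqrrN.
have z0 : z != 0.
  have h : ('i * (1 + 'i) : algC) != 0.
    rewrite mulf_neq0 ?neq0Ci //; exact: lam0.
  by move: hzl; rewrite !inE => /orP [] /eqP ->; rewrite ?oppr_eq0.
have [hx x1] := xu; have [hy y1] := yu.
split.
- rewrite (unit4 hx x1) (unit4 hy y1) ez2 mulrCA mulCii; ring.
- by rewrite !mulf_neq0 // gu_neq0.
move=> d hd [q hq ex] _ _; split => //.
exists (q * x^*); first by gauss.
by rewrite mulrA -ex mulrC nrm_unitE.
Qed.

Theorem theorem1 :
  (* (i) x^4 - y^4 = i z^2 has only trivial solutions in Z[i] *)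
  (forall x y z : algC, gaussint x -> gaussint y -> gaussint z ->
     x ^+ 4 - y ^+ 4 = 'i * z ^+ 2 -> x * y * z = 0)
  /\
  (* (ii) the nontrivial primitive solutions of x^4 + y^4 = i z^2 are exactly
     x, y in {+-1, +-i}, z = +- i(1+i) *)
  (forall x y z : algC, gaussint x -> gaussint y -> gaussint z ->
     ((x ^+ 4 + y ^+ 4 = 'i * z ^+ 2 /\ x * y * z != 0 /\ gcoprime3 x y z) <->
      ([/\ x \in [:: 1; -1; 'i; - 'i], y \in [:: 1; -1; 'i; - 'i]
         & z \in [:: 'i * (1 + 'i); - ('i * (1 + 'i))]]))).
Proof.
split; first exact: part1.
move=> x y z hx hy hz; split.
  by case=> H [nz gc]; apply: part2_fwd.
by move=> [mx my mz]; have [H nz gc] := part2_bwd mx my mz.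
Qed.
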